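(* Let $\mathcal{M}=(V,\{A_i\}_{i\in V},P)$ be a finite Markov decision process with $V=\{1,\dots,n\}$, nonempty finite action sets $A_i$ and transition probabilities $P(i,a,j)$. Fix $\lambda\ge 0$ and $\zeta>0$. For $S\subseteq V$ define the polytope $$\mathcal{P}(\lambda,S)=\Big\{h\in\mathbb{R}^n:\ h(i)-\sum_{j=1}^n P(i,a,j)h(j)\le b(S)_{(i,a)}\ \ \forall i\in V,\ a\in A_i,\ \ \|h\|_\infty\le\zeta\Big\},$$ where $b(S)_{(i,a)}=1-\lambda$ if $i\in S$ and $b(S)_{(i,a)}=1$ if $i\notin S$. Let $r_\lambda(S)$ be the $n$-dimensional Lebesgue volume of $\mathcal{P}(\lambda,S)$. Then $r_\lambda:2^V\to\mathbb{R}$ is nonincreasing and supermodular, i.e., $r_\lambda(T)\le r_\lambda(S)$ whenever $S\subseteq T\subseteq V$, and $r_\lambda(S\cup\{v\})-r_\lambda(S)\le r_\lambda(T\cup\{v\})-r_\lambda(T)$ for all $S\subseteq T\subseteq V$ and $v\in V\setminus T$.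
   Context: A set function $f:2^W\to\mathbb{R}$ is submodular if $f(S\cup\{v\})-f(S)\ge f(T\cup\{v\})-f(T)$ for all $S\subseteq T\subseteq W$ and $v\notin T$; it is supermodular if $-f$ is submodular. *)

(* Defs.v *)
From HB Require Import structures.
From mathcomp Require Import all_boot all_order all_algebra.
From mathcomp Require Import all_classical all_reals all_analysis.
Set Implicit Arguments. Unset Strict Implicit. Unset Printing Implicit Defensive.
Import Order.TTheory GRing.Theory Num.Theory.
Local Open Scope ring_scope.
Local Open Scope classical_set_scope.

(* Vectors of R^n are functions 'I_n -> R.  [vcons x v] is (x, v_0, ..., v_(n-1)). *)
Definition vcons (R : Type) (n : nat) (x : R) (v : 'I_n -> R) : 'I_n.+1 -> R :=
  fun i => if unlift ord0 i is Some j then v j else x.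

Fixpoint iint (R : realType) (n : nat) : (('I_n -> R) -> \bar R) -> \bar R :=
  match n return (('I_n -> R) -> \bar R) -> \bar R with
  | 0 => fun f => f (fun _ => 0)
  | n'.+1 => fun f =>
      (\int[@lebesgue_measure R]_(x in setT) @iint R n' (fun v => f (vcons (x : R) v)))%E
  end.

(* n-dimensional Lebesgue volume of a (Borel) set A of R^n, computed by
   Tonelli as the iterated integral of its indicator function. *)
Definition lvolume (R : realType) (n : nat) (A : set ('I_n -> R)) : \bar R :=
  iint (fun h => (\1_A h)%:E).

Definition bS (R : realType) (n : nat) (lam : R) (S : {set 'I_n}) (i : 'I_n) : R :=
  if i \in S then 1 - lam else 1.

Definition mdp_polytope (R : realType) (n : nat) (A : 'I_n -> finType)
  (P : forall i : 'I_n, A i -> 'I_n -> R) (lam zeta : R) (S : {set 'I_n})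
  : set ('I_n -> R) :=
  [set h | (forall (i : 'I_n) (a : A i),
              h i - \sum_(j < n) P i a j * h j <= bS lam S i)
           /\ (forall i : 'I_n, `|h i| <= zeta)].

(* r_lambda(S) := Lebesgue volume of P(lambda, S) (a finite number, since the
   polytope lies in the cube [-zeta, zeta]^n). *)
Definition r_lam (R : realType) (n : nat) (A : 'I_n -> finType)
  (P : forall i : 'I_n, A i -> 'I_n -> R) (lam zeta : R) (S : {set 'I_n}) : R :=
  fine (lvolume (mdp_polytope P lam zeta S)).

(* Main.v *)
Require Import Defs.
From HB Require Import structures.
From mathcomp Require Import all_boot all_order all_algebra.
From mathcomp Require Import all_classical all_reals all_analysis measurable_realfun.
From mathcomp Require Import lra.
Import Order.TTheory GRing.Theory Num.Theory.
Set Implicit Arguments. Unset Strict Implicit. Unset Printing Implicit Defensive.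
Local Open Scope ring_scope.
Local Open Scope classical_set_scope.

Section mkSF.
Context d (T : measurableType d) (R : realType) (mu : {measure set T -> \bar R})
  (H : sigma_finite setT mu).
Definition mkSF of sigma_finite setT mu : set T -> \bar R := mu.
HB.instance Definition _ := Measure.on (mkSF H).
HB.instance Definition _ := Measure_isSigmaFinite.Build _ _ _ (mkSF H) H.
End mkSF.

Section prodSF.
Local Open Scope ereal_scope.
Context d1 d2 (T1 : measurableType d1) (T2 : measurableType d2) (R : realType).
Variable m1 : {sigma_finite_measure set T1 -> \bar R}%R.
Variable m2 : {sigma_finite_measure set T2 -> \bar R}%R.

Lemma prod_sigma_finite : sigma_finite setT (m1 \x m2).
Proof.
have /sigma_finiteP[F [TF ndF Foo]] := sigma_finiteT m1.
have /sigma_finiteP[G [TG ndG Goo]] := sigma_finiteT m2.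
exists (fun n => F n `*` G n).
 rewrite -setXTT TF TG predeqE => -[x y]; split.
    move=> [/= [n _ Fnx] [k _ Gky]]; exists (maxn n k) => //; split.
    - by move: x Fnx; exact/subsetPset/ndF/leq_maxl.
    - by move: y Gky; exact/subsetPset/ndG/leq_maxr.
  by move=> [n _ []/= ? ?]; split; exists n.
move=> k; have [? ?] := Foo k; have [? ?] := Goo k.
split; first exact: measurableX.
by rewrite product_measure1E// lte_mul_pinfty// ge0_fin_numE.
Qed.
End prodSF.

Definition cube (R : realType) n (z : R) : set ('I_n -> R) :=
  [set h | forall i, `|h i| <= z].

Section gen.
Context d (T : measurableType d) (R : realType).

Lemma mle (g : T -> R) c : measurable_fun setT g -> measurable [set t | g t <= c].
Proof.
move=> mg; have := mg measurableT _ (measurable_itv `]-oo, c]%R).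
rewrite setTI; congr measurable; apply/seteqP; split => t /=; by rewrite in_itv.
Qed.

Lemma mforall (I : finType) (F : I -> set T) :
  (forall i, measurable (F i)) -> measurable [set t | forall i, F i t].
Proof.
move=> mF.
have -> : [set t | forall i, F i t] = \bigcap_(i in [set: I]) F i.
  by apply/seteqP; split => t /= H i //; apply: H.
by apply: fin_bigcap_measurable => //; exact: finite_finset.
Qed.

Lemma mcube n (e : T -> 'I_n -> R) z : (forall i, measurable_fun setT (fun t => e t i)) ->
  measurable (e @^-1` cube z).
Proof.
move=> me; apply: (mforall (F := fun i => [set t | `|e t i| <= z])) => i.
apply: mle; apply: measurableT_comp; [exact: normr_measurable | exact: me].
Qed.
End gen.

Section S.
Variable R : realType.

Definition Hyp (n : nat) : Prop :=
  exists (d : measure_display) (T : measurableType d)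
    (mu : {sigma_finite_measure set T -> \bar R}) (e : T -> 'I_n -> R),
    (forall i, measurable_fun setT (fun t => e t i)) /\
    (forall z : R, (mu (e @^-1` cube z) < +oo)%E) /\
    (forall f : ('I_n -> R) -> \bar R, (forall h, (0 <= f h)%E) ->
       measurable_fun [set: T] (fun t => f (e t)) ->
       iint f = (\int[mu]_(t in setT) f (e t))%E).

Lemma hyp0 : Hyp 0.
Proof.
exists default_measure_display, unit, (\d_ tt : {sigma_finite_measure set unit -> \bar R}).
exists (fun _ _ => 0); split => //; split.
  by move=> z; rewrite /= /dirac indicE ltry.
move=> f f0 mf /=.
by rewrite integral_dirac // diracE in_setT mul1e.
Qed.

Lemma hypS n : Hyp n -> Hyp n.+1.
Proof.
move=> [d [T [mu [e [me [fin ie]]]]]].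
exists _, _, (mkSF (prod_sigma_finite (@lebesgue_measure R) mu) : {sigma_finite_measure set _ -> \bar R}%R).
exists (fun z => vcons z.1 (e z.2)); split.
  move=> i; rewrite /vcons; case: (unlift ord0 i) => [j|].
    exact: (measurableT_comp (me j) measurable_snd).
  exact: measurable_fst.
split.
  move=> z /=.
  have -> : (fun z0 => vcons z0.1 (e z0.2)) @^-1` cube z
     = [set x : R | `|x| <= z] `*` (e @^-1` cube z).
    apply/seteqP; split => -[x s] /=.
      move=> H; split.
        by have := H ord0; rewrite /vcons unlift_none.
      by move=> j; have := H (lift ord0 j); rewrite /vcons liftK.
    move=> [Hx Hs] i; rewrite /vcons.
    by case: (unliftP ord0 i) => [j _|_]; [exact: Hs | exact: Hx].
  rewrite /mkSF product_measure1E; last 2 first.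
  - exact: mle.
  - exact: mcube.
  apply: lte_mul_pinfty => //; try exact: fin.
  have -> : [set x : R | `|x| <= z] = `[-z, z]%classic.
    by apply/seteqP; split => x /=; rewrite in_itv /= ler_norml.
  have := lebesgue_measure_itv `[-z, z]%R; rewrite /= => ->.
  by case: ifP => _ //; rewrite -EFinD.
move=> f f0 mf /=.
rewrite (fubini_tonelli1 _ mf) //.
apply: eq_integral => x _.
rewrite /fubini_F; apply: ie => //.
exact: (measurable_fun_pair2 x mf).
Qed.

Lemma hypn n : Hyp n.
Proof. elim: n => [|n IH]; [exact: hyp0 | exact: hypS]. Qed.
End S.

Lemma bS_mono (R : realType) n (lam : R) (S T : {set 'I_n}) i :
  0 <= lam -> S \subset T -> bS lam T i <= bS lam S i.
Proof.
move=> l0 ST; rewrite /bS.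
case: ifP => iT; case: ifP => iS //.
- by rewrite gerBl.
- by rewrite (fintype.subsetP ST _ iS) in iT.
Qed.

Unset Implicit Arguments.
Theorem proposition3 (R : realType) (n : nat) (A : 'I_n -> finType)
  (P : forall i : 'I_n, A i -> 'I_n -> R)
  (A_nonempty : forall i : 'I_n, (0 < #|A i|)%N)
  (P_ge0 : forall (i : 'I_n) (a : A i) (j : 'I_n), 0 <= P i a j)
  (P_sum1 : forall (i : 'I_n) (a : A i), \sum_(j < n) P i a j = 1)
  (lam zeta : R) (lam_ge0 : 0 <= lam) (zeta_gt0 : 0 < zeta) :
  (forall S T : {set 'I_n}, S \subset T ->
     r_lam P lam zeta T <= r_lam P lam zeta S) /\
  (forall (S T : {set 'I_n}) (v : 'I_n), S \subset T -> v \notin T ->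
     r_lam P lam zeta (v |: S) - r_lam P lam zeta S
       <= r_lam P lam zeta (v |: T) - r_lam P lam zeta T).
Proof.
have [d [T [mu [e [me [fin ie]]]]]] := hypn R n.
pose E S := e @^-1` mdp_polytope P lam zeta S.
have mrow i (a : A i) c : measurable [set t | e t i - \sum_(j < n) P i a j * e t j <= c].
  apply: mle; apply: measurable_funB => //.
  apply: measurable_sum => j; apply: measurable_funM => //.
have mE S : measurable (E S).
  apply: measurableI.
    apply: (mforall (F := fun i => [set t | forall a : A i,
       e t i - \sum_(j < n) P i a j * e t j <= bS lam S i])) => i.
    exact: (mforall (F := fun a => [set t | e t i - \sum_(j < n) P i a j * e t j <= bS lam S i])).
  exact: (mcube (e := e) zeta me).
have finsub X : measurable X -> X `<=` e @^-1` cube zeta -> mu X \is a fin_num.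
  move=> mX Xc; rewrite ge0_fin_numE //; apply: le_lt_trans (fin zeta).
  by apply: le_measure => //; rewrite inE //; exact: mcube.
have EC S : E S `<=` e @^-1` cube zeta by move=> t [].
have rE S : r_lam P lam zeta S = fine (mu (E S)).
  rewrite /r_lam /lvolume ie; last first.
  - apply/measurable_EFinP; exact: (@measurable_indic _ _ _ setT (E S) (mE S)).
  - by move=> h; rewrite lee_fin.
  rewrite (integral_indic _ _ (mE S)) //.
  by congr (fine (mu _)); apply/seteqP; split => t /=; [case | ].
have Emono (S U : {set 'I_n}) : S \subset U -> E U `<=` E S.
  move=> SU t [H1 H2]; split => // i a.
  exact: le_trans (H1 i a) (bS_mono i lam_ge0 SU).
split.
  move=> S U SU; rewrite !rE; apply: fine_le; try exact: finsub.
  by apply: le_measure; rewrite ?inE //; exact: Emono.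
move=> S U v SU vU.
pose C := [set t | forall a : A v, e t v - \sum_(j < n) P v a j * e t j <= 1 - lam].
have mC : measurable C by exact: (mforall (F := fun a => [set t | e t v - \sum_(j < n) P v a j * e t j <= 1 - lam])).
have EvE (X : {set 'I_n}) : v \notin X -> E (v |: X) = E X `&` C.
  move=> vX; apply/seteqP; split => t /=.
    move=> [H1 H2]; split; [split=> // i a|].
      apply: le_trans (H1 i a) _; apply: bS_mono => //; exact: finset.subsetUr.
    by move=> a; have := H1 v a; rewrite /bS setU11.
  move=> [[H1 H2] H3]; split => // i.
  case: (eqVneq i v) => [->|iv] a; first by rewrite /bS setU11; exact: H3.
  by rewrite /bS in_setU1 (negbTE iv) /=; exact: H1 i a.
have vS : v \notin S by apply: contra vU; exact: (fintype.subsetP SU).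
rewrite !rE !EvE //.
rewrite (measureDI _ (mE S) mC) (measureDI _ (mE U) mC).
have fS1 := finsub _ (measurableD (mE S) mC) (subset_trans (@subDsetl _ _ _) (EC S)).
have fS2 := finsub _ (measurableI _ _ (mE S) mC) (subset_trans (@subIsetl _ _ _) (EC S)).
have fU1 := finsub _ (measurableD (mE U) mC) (subset_trans (@subDsetl _ _ _) (EC U)).
have fU2 := finsub _ (measurableI _ _ (mE U) mC) (subset_trans (@subIsetl _ _ _) (EC U)).
rewrite !fineD //.
have : fine (mu (E U `\` C)) <= fine (mu (E S `\` C)).
  apply: fine_le => //; apply: le_measure; rewrite ?inE //; try exact: measurableD.
  by move=> t [Ht Hc]; split => //; exact: Emono Ht.
lra.
Qed.
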